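(* Let $s\in\Sigma^*$ be non-empty with run-length encoding $s=a_1^{m_1}\cdots a_r^{m_r}$, let $h=\lceil r/2\rceil$, and let $\mathcal{K}(s)$ be the symbol string of the last token of $\mathcal{F}(s)$. Then $\mathcal{K}(s)=a_h^{m_h}$ if $r$ is odd and $\mathcal{K}(s)=a_h^{m_h}a_{h+1}^{m_{h+1}}$ if $r$ is even. In either case $\mathcal{K}(s)$ contains at most two distinct symbols.
   Context: Let $\Sigma$ be an alphabet and $\texttt{@},\texttt{\$}$ two distinct symbols not in $\Sigma$. The run-length encoding of a non-empty string $s$ is the unique decomposition $s=a_1^{m_1}\cdots a_r^{m_r}$ with $a_i\in\Sigma$, $m_i\ge1$, $a_i\ne a_{i+1}$ ($a^m$ is $a$ repeated $m$ times). For $s$ with $|s|=n$ let $\hat s=\texttt{@}\,s\,\texttt{\$}$ (positions $1,\dots,n+2$); $\hat s[i..j)$ is the substring at positions $i,\dots,j-1$. The leading (trailing) run of a non-empty string is its longest prefix (suffix) consisting of one repeated symbol. The Flashback decomposition $\mathcal{F}(s)$ is the sequence of tokens $(\sigma,p)$ (symbol string $\sigma$, split position $p$) produced as follows, starting from active span $[lo,hi)=[1,n+3)$: if $lo\ge hi$, stop. Let $\ell$ be the leading-run length of $\hat s[lo..hi)$. If $\ell=hi-lo$, append $(\hat s[lo..hi),0)$ and stop. Otherwise let $\hat s[r'..hi)$ be the trailing run of $\hat s[lo..hi)$ and $\sigma=\hat s[lo..lo+\ell)\cdot\hat s[r'..hi)$; if $lo+\ell\ge r'$, append $(\sigma,0)$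 and stop; otherwise append $(\sigma,\ell)$ and repeat with $[lo+\ell,r')$. The symbol string of the last token is called the peeling kernel $\mathcal{K}(s)$. *)

(* Defs.v *)
From mathcomp Require Import all_boot.
Set Implicit Arguments. Unset Strict Implicit. Unset Printing Implicit Defensive.

(* Extended alphabet: inl a for a in Sigma, inr false = '@', inr true = '$'. *)
Definition esym (T : eqType) := (T + bool)%type.
Definition At {T : eqType} : esym T := inr false.
Definition Dol {T : eqType} : esym T := inr true.

(* hat s = @ s $ , positions 1..n+2 *)
Definition hat (T : eqType) (s : seq T) : seq (esym T) :=
  At :: rcons (map inl s) Dol.

(* w[i..j) with 1-based positions i,...,j-1 *)
Definition sub (S : eqType) (w : seq S) (i j : nat) : seq S :=
  take (j - i) (drop i.-1 w).

Definition lead_len (S : eqType) (w : seq S) : nat :=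
  match w with
  | [::] => 0
  | x :: t => (find (fun y => y != x) t).+1
  end.

Definition trail_len (S : eqType) (w : seq S) : nat := lead_len (rev w).

Fixpoint flash_aux (S : eqType) (fuel : nat) (w : seq S) (lo hi : nat)
  : seq (seq S * nat) :=
  match fuel with
  | 0 => [::]
  | fuel'.+1 =>
    if hi <= lo then [::] else
    let u := sub w lo hi in
    let l := lead_len u in
    if l == hi - lo then [:: (u, 0)] else
    let r' := hi - trail_len u in
    let sigma := sub w lo (lo + l) ++ sub w r' hi in
    if r' <= lo + l then [:: (sigma, 0)]
    else (sigma, l) :: flash_aux fuel' w (lo + l) r'
  end.

(* Flashback decomposition F(s); start span [1, n+3).  The fuel n+3 exceeds the
   number of iterations, since each non-final step shrinks the span by >= 2. *)
Definition flashback (T : eqType) (s : seq T) : seq (seq (esym T) * nat) :=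
  flash_aux (size s + 3) (hat s) 1 (size s + 3).

Definition kernel (T : eqType) (s : seq T) : seq (esym T) :=
  (last ([::], 0) (flashback s)).1.

(* Main.v *)
Require Import Defs.
From mathcomp Require Import all_boot zify.

Section Gen.
Variable S : eqType.

Lemma sub_mid (P X Q : seq S) lo hi :
  lo = (size P).+1 -> hi = lo + size X -> sub (P ++ X ++ Q) lo hi = X.
Proof.
move=> -> ->; rewrite /sub /= addKn drop_size_cat // take_size_cat //.
Qed.

Lemma lead_nseq_cons (M : nat) (x y : S) t :
  0 < M -> y != x -> lead_len (nseq M x ++ y :: t) = M.
Proof.
case: M => // M _ yx /=; rewrite find_cat has_nseq /= eqxx andbF size_nseq /= yx.
by rewrite addn0.
Qed.

Lemma lead_nseq (M : nat) (x : S) : 0 < M -> lead_len (nseq M x) = M.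
Proof.
case: M => // M _ /=; rewrite -(cats0 (nseq M x)) find_cat has_nseq /= eqxx andbF size_nseq /=.
by rewrite addn0.
Qed.

Variables (A : nat -> S) (M : nat -> nat).
Definition blk i := nseq (M i) (A i).
Definition bl k n := flatten [seq blk i | i <- iota k n].
Definition tgt k n := if odd n then blk (k + n./2) else blk (k + n./2 - 1) ++ blk (k + n./2).

Lemma bl_cons k n : bl k n.+1 = blk k ++ bl k.+1 n.
Proof. by []. Qed.

Lemma bl_rcons k n : bl k n.+1 = bl k n ++ blk (k + n).
Proof. by rewrite /bl -addn1 iotaD map_cat flatten_cat /= cats0. Qed.

Lemma blk_cons i : 0 < M i -> blk i = A i :: nseq (M i).-1 (A i).
Proof. by rewrite /blk; case: (M i). Qed.

Lemma flash_step fuel (w : seq S) lo hi : flash_aux fuel.+1 w lo hi =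
    if hi <= lo then [::] else
    let u := sub w lo hi in
    let l := lead_len u in
    if l == hi - lo then [:: (u, 0)] else
    let r' := hi - trail_len u in
    let sigma := sub w lo (lo + l) ++ sub w r' hi in
    if r' <= lo + l then [:: (sigma, 0)]
    else (sigma, l) :: flash_aux fuel w (lo + l) r'.
Proof. by []. Qed.

Lemma main fuel : forall n k (P Q : seq S) lo, n <= fuel -> 0 < n ->
  (forall i, k <= i < k + n -> 0 < M i) ->
  (forall i, k <= i -> i.+1 < k + n -> A i != A i.+1) ->
  lo = (size P).+1 ->
  exists pre, flash_aux fuel (P ++ bl k n ++ Q) lo (lo + size (bl k n))
              = rcons pre (tgt k n, 0).
Proof.
elim: fuel => [|fuel IH] n k P Q lo nf n0 HM HA Hlo; first by move: nf n0; rewrite leqn0 => /eqP->.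
rewrite flash_step /=.
case: n nf n0 HM HA => [//|[|[|p]]] nf _ HM HA.
-
  have Mk : 0 < M k by apply: HM; lia.
  have e1 : bl k 1 = blk k by rewrite /bl /= cats0.
  rewrite e1 (sub_mid _ _ _ _ _ Hlo erefl) /blk size_nseq.
  rewrite ifF; last lia.
  rewrite lead_nseq // addKn eqxx.
  by exists [::]; rewrite /tgt /= addn0.
-
  have Mk : 0 < M k by apply: HM; lia.
  have Mk1 : 0 < M k.+1 by apply: HM; lia.
  have Ak : A k != A k.+1 by apply: HA; lia.
  have e1 : bl k 2 = blk k ++ blk k.+1 by rewrite /bl /= cats0.
  have ll : lead_len (blk k ++ blk k.+1) = M k.
    by rewrite (blk_cons _ Mk1) lead_nseq_cons // eq_sym.
  have tl : trail_len (blk k ++ blk k.+1) = M k.+1.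
    rewrite /trail_len rev_cat /blk !rev_nseq.
    by rewrite -/(blk k) (blk_cons _ Mk) lead_nseq_cons.
  rewrite e1 (sub_mid _ _ _ _ _ Hlo erefl) ll tl size_cat /blk !size_nseq.
  rewrite ifF; last lia.
  rewrite ifF; last lia.
  rewrite ifT; last lia.
  exists [::]; rewrite /= /tgt /=.
  rewrite -[(_ ++ _) ++ Q]catA (sub_mid _ _ _ _ _ Hlo); last by rewrite size_nseq.
  rewrite catA (sub_mid (P ++ nseq (M k) (A k)) (nseq (M k.+1) (A k.+1)) Q); first last.
  - by rewrite size_nseq; lia.
  - by rewrite size_cat size_nseq; lia.
  by rewrite addn1 subn1 /=.
-
  have Mk : 0 < M k by apply: HM; lia.
  have Mk1 : 0 < M k.+1 by apply: HM; lia.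
  have Mx : 0 < M (k + p.+1) by apply: HM; lia.
  have Ak : A k != A k.+1 by apply: HA; lia.
  have Ax : A (k + p.+1) != A (k + p.+1).+1 by apply: HA; lia.
  have sk : forall i, size (blk i) = M i by move=> i; rewrite /blk size_nseq.
  have ML : 0 < M (k + p.+1).+1 by apply: HM; lia.
  set L := (k + p.+1).+1.
  have e1 : bl k p.+3 = blk k ++ bl k.+1 p.+1 ++ blk L.
    by rewrite bl_cons bl_rcons addSn.
  have Mmid : 0 < size (bl k.+1 p.+1) by rewrite bl_cons size_cat sk; lia.
  have ll : lead_len (blk k ++ bl k.+1 p.+1 ++ blk L) = M k.
    rewrite /L -addSn -bl_rcons bl_cons (blk_cons _ Mk1) cat_cons.
    by rewrite /blk lead_nseq_cons // eq_sym.
  have tl : trail_len (blk k ++ bl k.+1 p.+1 ++ blk L) = M L.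
    rewrite catA -bl_cons bl_rcons /trail_len rev_cat {1}/blk rev_nseq.
    rewrite rev_cat /blk rev_nseq -/(blk (k + p.+1)) (blk_cons _ Mx) cat_cons lead_nseq_cons //.
  rewrite e1 (sub_mid _ _ _ _ _ Hlo erefl) ll tl size_cat (size_cat (bl k.+1 p.+1)) !sk.
  rewrite ifF; last lia.
  rewrite ifF; last lia.
  rewrite ifF; last lia.
  have H1 : p.+1 <= fuel by lia.
  have H3 : forall i, k.+1 <= i < k.+1 + p.+1 -> 0 < M i.
    by move=> i Hi; apply: HM; lia.
  have H4 : forall i, k.+1 <= i -> i.+1 < k.+1 + p.+1 -> A i != A i.+1.
    by move=> i Hi1 Hi2; apply: HA; lia.
  have H5 : lo + M k = (size (P ++ blk k)).+1 by rewrite size_cat sk Hlo; lia.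
  have [pre Hpre] := IH p.+1 k.+1 (P ++ blk k) (blk L ++ Q) (lo + M k) H1 erefl H3 H4 H5.
  have wE : P ++ (blk k ++ bl k.+1 p.+1 ++ blk L) ++ Q =
            (P ++ blk k) ++ bl k.+1 p.+1 ++ blk L ++ Q by rewrite !catA.
  have hiE : lo + (M k + (size (bl k.+1 p.+1) + M L)) - M L =
             lo + M k + size (bl k.+1 p.+1) by lia.
  have tgtE : tgt k.+1 p.+1 = tgt k p.+3.
    rewrite /tgt /=.
    have e2 : k + (uphalf p).+1 = k.+1 + uphalf p by rewrite addnS addSn.
    by rewrite negbK e2.
  rewrite wE hiE Hpre tgtE -rcons_cons.
  by eexists.
Qed.
End Gen.
Arguments blk {S}.
Arguments bl {S}.
Arguments tgt {S}.
Arguments main {S}.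

Lemma size_undup2 (S : eqType) (x y : S) u :
  all (fun z => (z == x) || (z == y)) u -> size (undup u) <= 2.
Proof.
move=> H; apply: (uniq_leq_size (s2 := [:: x; y])); first exact: undup_uniq.
by move=> z; rewrite mem_undup => /(allP H); rewrite !inE.
Qed.

Lemma size_runs (T : eqType) (m : nat -> nat) (x : nat -> T) r : forall k,
  (forall i, k <= i < k + r -> 0 < m i) ->
  r <= size (flatten [seq nseq (m i) (x i) | i <- iota k r]).
Proof.
elim: r => [//|r IH] k H /=; rewrite size_cat size_nseq.
have := IH k.+1 (fun i Hi => H i (ltac:(lia))).
have := H k (ltac:(lia)). lia.
Qed.

Definition Aext (T : eqType) (r : nat) (a : nat -> T) (i : nat) : Defs.esym T :=
  if i == 0 then At else if i <= r then inl (a i) else Dol.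
Definition Mext (r : nat) (m : nat -> nat) (i : nat) : nat :=
  if i == 0 then 1 else if i <= r then m i else 1.

Theorem corollary6p7 (T : eqType) (s : seq T) (r : nat)
    (a : nat -> T) (m : nat -> nat) :
  s != [::] ->
  (forall i, 1 <= i <= r -> 1 <= m i) ->
  (forall i, 1 <= i < r -> a i != a i.+1) ->
  s = flatten [seq nseq (m i) (a i) | i <- iota 1 r] ->
  let h := (r + 1) %/ 2 in
  kernel s =
    map inl (if odd r then nseq (m h) (a h)
             else nseq (m h) (a h) ++ nseq (m h.+1) (a h.+1))
  /\ size (undup (kernel s)) <= 2.
Proof.
move=> sn0 Hm Ha Hs h.
have r1 : 1 <= r by move: sn0; rewrite Hs; case: r {Hs Hm Ha h}.
pose A := Aext T r a.
pose M := Mext r m.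
have blkE : forall i, 1 <= i <= r -> blk A M i = map inl (nseq (m i) (a i)).
  move=> i Hi; rewrite map_nseq /blk /A /M /Aext /Mext.
  have -> : (i == 0) = false by lia.
  by have -> : (i <= r) = true by lia.
have blE : bl A M 1 r = map inl s.
  rewrite Hs map_flatten -map_comp /bl; congr flatten.
  apply/eq_in_map => i; rewrite mem_iota => Hi; rewrite blkE //; lia.
have bl2 : bl A M 0 r.+2 = [:: At] ++ map inl s ++ [:: Dol].
  rewrite bl_cons bl_rcons blE; congr (_ ++ (_ ++ _)).
  rewrite /blk /A /M /Aext /Mext /=.
  by have -> : (r.+1 <= r) = false by lia.
have hatE : [::] ++ bl A M 0 r.+2 ++ [::] = hat s.
  by rewrite cats0 bl2 /hat /= cats1.
have hiE : 1 + size (bl A M 0 r.+2) = size s + 3.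
  rewrite bl2 !size_cat size_map /=; lia.
have sr : r <= size s.
  rewrite Hs; apply: size_runs => i Hi; apply: Hm; lia.
have HM : forall i, 0 <= i < 0 + r.+2 -> 0 < M i.
  move=> i Hi; rewrite /M /Mext; case: ifP => // /eqP H0; case: ifP => // Hr.
  apply: Hm; lia.
have HA : forall i, 0 <= i -> i.+1 < 0 + r.+2 -> A i != A i.+1.
  move=> i _ Hi; rewrite /A /Aext /=.
  case: ifP => [_|Hi0]; first by case: ifP.
  have -> : (i <= r) = true by lia.
  case: ifP => Hir //.
  by rewrite inj_eq; [apply: Ha; lia | move=> u v [] ].
have Hf : r.+2 <= size s + 3 by lia.
have := main A M (size s + 3) r.+2 0 [::] [::] 1 Hf erefl HM HA erefl.
rewrite hatE hiE => -[pre Hpre].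
have kE : kernel s = tgt A M 0 r.+2 by rewrite /kernel /flashback Hpre last_rcons.
have hE : r.+2./2 = if odd r then h else h.+1.
  rewrite -divn2 /h; case Ho: (odd r); have := modn2 r; rewrite Ho /=; lia.
have oE : odd r.+2 = odd r by rewrite /= negbK.
rewrite kE /tgt oE hE.
case Ho: (odd r).
  rewrite add0n blkE; last by rewrite /h; have := modn2 r; rewrite Ho; lia.
  split=> //; apply: (size_undup2 _ (inl (a h)) (inl (a h))).
  by rewrite all_map; apply/allP => z; rewrite mem_nseq => /andP[_ /eqP->] /=; rewrite eqxx.
rewrite add0n subn1 /= !blkE; first last.
- by rewrite /h; have := modn2 r; rewrite Ho; lia.
- by rewrite /h; have := modn2 r; rewrite Ho; lia.
split; first by rewrite map_cat.
apply: (size_undup2 _ (inl (a h)) (inl (a h.+1))).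
rewrite all_cat !all_map; apply/andP; split; apply/allP => z;
  rewrite mem_nseq => /andP[_ /eqP->] /=; rewrite eqxx ?orbT //.
Qed.
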